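(* Let $\mathcal{G}=(G,(m,r))$ be a mutant-biased fitness graph. Then the fixation probability is submodular: for all $S,T\subseteq V$, \[ \operatorname{fp}_{\mathcal{G}}(S)+\operatorname{fp}_{\mathcal{G}}(T)\ge\operatorname{fp}_{\mathcal{G}}(S\cup T)+\operatorname{fp}_{\mathcal{G}}(S\cap T). \]
   Context: A fitness graph is $\mathcal{G}=(G,(m,r))$ where $G=(V,E,w)$ is a strongly connected directed graph, $w(u,\cdot)$ is a probability distribution over out-neighbours of $u$, and $r,m\colon V\to(0,\infty)$; it is mutant-biased if $m(u)\ge r(u)$ for all $u$. For a configuration (set of mutants) $X\subseteq V$, $f_X(u)=m(u)$ if $u\in X$, else $r(u)$. The Heterogeneous Moran process starts at $\mathcal{X}_0=S$; from $\mathcal{X}_t=X$ it picks $u$ with probability $f_X(u)/\sum_v f_X(v)$, then $v$ with probability $w(u,v)$, and $v$ takes the type of $u$. $\operatorname{fp}_{\mathcal{G}}(S)$ is the probability that the process eventually reaches $V$ (with $\operatorname{fp}_{\mathcal{G}}(\emptyset)=0$). *)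

(* Defs.v *)
From HB Require Import structures.
From mathcomp Require Import all_boot all_order all_algebra.
From mathcomp Require Import all_classical all_reals all_analysis.
Set Implicit Arguments. Unset Strict Implicit. Unset Printing Implicit Defensive.
Import Order.TTheory GRing.Theory Num.Theory.
Import numFieldNormedType.Exports.
Local Open Scope ring_scope.

Section Moran.
Variables (R : realType) (V : finType).

Definition fitness_graph (E : rel V) (w : V -> V -> R) (m r : V -> R) : Prop :=
  (forall u v, connect E u v) /\
  (forall u v, E u v -> 0 < w u v) /\
  (forall u v, ~~ E u v -> w u v = 0) /\
  (forall u, \sum_(v : V) w u v = 1) /\
  (forall u, 0 < r u) /\ (forall u, 0 < m u).

Definition mutant_biased (m r : V -> R) : Prop := forall u, r u <= m u.

Variables (w : V -> V -> R) (m r : V -> R).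

Definition fit (X : {set V}) (u : V) : R := if u \in X then m u else r u.

(* new configuration after u reproduces onto v *)
Definition step_cfg (X : {set V}) (u v : V) : {set V} :=
  if u \in X then v |: X else X :\ v.

(* reach_prob t X = probability that the process started at X reaches the
   configuration V (= [set: V]) within t steps. *)
Fixpoint reach_prob (t : nat) (X : {set V}) : R :=
  if X == [set: V] then 1 else
  match t with
  | 0 => 0
  | t'.+1 =>
      \sum_(u : V) \sum_(v : V)
         (fit X u / \sum_(x : V) fit X x) * w u v * reach_prob t' (step_cfg X u v)
  end.

(* Fixation probability: probability of eventually reaching V,
   with fp(emptyset) = 0 by convention. *)
Definition fp (S : {set V}) : R :=
  if S == finset.set0 then 0 else limn (fun t => reach_prob t S).

End Moran.

(* Main.v *)
Require Import Defs.
From HB Require Import structures.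
From mathcomp Require Import all_boot all_order all_algebra.
From mathcomp Require Import all_classical all_reals all_analysis.
From mathcomp Require Import ring lra.
Set Implicit Arguments. Unset Strict Implicit. Unset Printing Implicit Defensive.
Import Order.TTheory GRing.Theory Num.Theory.
Import numFieldNormedType.Exports.
Local Open Scope ring_scope.

Section Lat.
Variables (V : finType).

Definition stay (X : {set V}) (u v : V) : {set V} := if u \in X then v |: X else X.

Definition lmono (s : {set V} -> {set V}) :=
  (forall X Y : {set V}, X \subset Y -> s X \subset s Y) /\ (forall X Y : {set V}, s (X :|: Y) = s X :|: s Y).

Lemma in_step (X : {set V}) u v z :
  (z \in step_cfg X u v) = if u \in X then (z == v) || (z \in X) else (z != v) && (z \in X).
Proof. by rewrite /step_cfg; case: ifP; rewrite ?inE. Qed.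

Lemma in_stay (X : {set V}) u v z :
  (z \in stay X u v) = if u \in X then (z == v) || (z \in X) else (z \in X).
Proof. by rewrite /stay; case: ifP; rewrite ?inE. Qed.

Lemma lmono_step u v : lmono (fun X => step_cfg X u v).
Proof.
split.
- move=> X Y /fintype.subsetP sXY; apply/fintype.subsetP => z; rewrite !in_step.
  case uX: (u \in X); first rewrite (sXY _ uX).
  + by case/orP => [->|/sXY ->]; rewrite ?orbT.
  + by case: (u \in Y) => /andP[zv /sXY ->]; rewrite ?orbT ?zv.
- move=> X Y; apply/setP => z; rewrite !inE !in_step !inE.
  by case: (u \in X); case: (u \in Y); case: (z == v); case: (z \in X); case: (z \in Y).
Qed.

Lemma lmono_stay u v : lmono (fun X => stay X u v).
Proof.
split.
- move=> X Y /fintype.subsetP sXY; apply/fintype.subsetP => z; rewrite !in_stay.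
  case uX: (u \in X); first rewrite (sXY _ uX).
  + by case/orP => [->|/sXY ->]; rewrite ?orbT.
  + by case: (u \in Y) => /sXY ->; rewrite ?orbT.
- move=> X Y; apply/setP => z; rewrite !inE !in_stay !inE.
  by case: (u \in X); case: (u \in Y); case: (z == v); case: (z \in X); case: (z \in Y).
Qed.

Variable R : realType.
Definition monof (f : {set V} -> R) := forall X Y : {set V}, X \subset Y -> f X <= f Y.
Definition submf (f : {set V} -> R) := forall X Y : {set V}, f (X :|: Y) + f (X :&: Y) <= f X + f Y.

Lemma comp_ms (f : {set V} -> R) s : lmono s -> monof f -> submf f ->
  monof (fun X => f (s X)) /\ submf (fun X => f (s X)).
Proof.
move=> [sm su] fm fs; split; first by move=> X Y /sm /fm.
move=> X Y /=; rewrite su.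
apply: le_trans (fs (s X) (s Y)); rewrite lerD2l; apply: fm.
by rewrite finset.subsetI !sm // ?finset.subsetIl ?finset.subsetIr.
Qed.

Lemma lin_ms (f g : {set V} -> R) a b : 0 <= a -> 0 <= b ->
  monof f -> submf f -> monof g -> submf g ->
  monof (fun X => a * f X + b * g X) /\ submf (fun X => a * f X + b * g X).
Proof.
move=> a0 b0 fm fs gm gs; split.
  by move=> X Y sXY; rewrite lerD // ler_wpM2l // ?fm ?gm.
move=> X Y; have := fs X Y; have := gs X Y.
move=> h1 h2.
have h1' := ler_wpM2l b0 h1; have h2' := ler_wpM2l a0 h2.
rewrite !mulrDr in h1' h2'. lra.
Qed.

Lemma sum_ms (I : finType) (F : I -> {set V} -> R) :
  (forall i, monof (F i) /\ submf (F i)) ->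
  monof (fun X => \sum_i F i X) /\ submf (fun X => \sum_i F i X).
Proof.
move=> H; split.
  by move=> X Y sXY; apply: ler_sum => i _; apply: (H i).1.
move=> X Y; rewrite -!big_split /=; apply: ler_sum => i _; exact: (H i).2.
Qed.

End Lat.
Section Main.
Variables (R : realType) (V : finType) (E : rel V) (w : V -> V -> R) (m r : V -> R).
Hypotheses (Hw0 : forall u v, 0 <= w u v) (Hw1 : forall u, \sum_v w u v = 1)
  (Hr : forall u, 0 < r u) (Hm : forall u, 0 < m u) (Hmr : forall u, r u <= m u)
  (HE : forall u v, E u v -> 0 < w u v) (Hc : forall u v, connect E u v).
Variable z0 : V.

Definition MM := \sum_x m x.
Definition FF (X : {set V}) := \sum_x fit m r X x.

Lemma MM_gt0 : 0 < MM.
Proof.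
rewrite /MM (bigD1 z0) //=; apply: ltr_pwDl => //.
by apply: sumr_ge0 => i _; apply: ltW.
Qed.

Lemma fit_gt0 X u : 0 < fit m r X u.
Proof. by rewrite /fit; case: ifP. Qed.

Lemma fit_le X u : fit m r X u <= m u.
Proof. by rewrite /fit; case: ifP. Qed.

Lemma FF_gt0 X : 0 < FF X.
Proof.
rewrite /FF (bigD1 z0) //=; apply: ltr_pwDl; first exact: fit_gt0.
by apply: sumr_ge0 => i _; apply: ltW; apply: fit_gt0.
Qed.

Lemma FF_le X : FF X <= MM.
Proof. by apply: ler_sum => i _; apply: fit_le. Qed.

Definition Lop (f : {set V} -> R) (X : {set V}) : R :=
  \sum_u \sum_v (w u v / MM) * (r u * f (step_cfg X u v) + (m u - r u) * f (stay X u v)).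

Definition Pop (f : {set V} -> R) (X : {set V}) : R :=
  \sum_u \sum_v (fit m r X u / \sum_x fit m r X x) * w u v * f (step_cfg X u v).

Lemma L_mono f g X : (forall Y, f Y <= g Y) -> Lop f X <= Lop g X.
Proof.
move=> fg; apply: ler_sum => u _; apply: ler_sum => v _.
have := MM_gt0 => M0.
apply: ler_wpM2l; first by rewrite divr_ge0 // ltW.
apply: lerD; apply: ler_wpM2l => //; first exact: ltW.
by rewrite subr_ge0.
Qed.

Lemma L_const c X : Lop (fun _ => c) X = c.
Proof.
have M0 : MM != 0 by rewrite gt_eqF // MM_gt0.
transitivity (\sum_u m u * c / MM).
  apply: eq_bigr => u _; rewrite -[RHS]mul1r -(Hw1 u) big_distrl /=.
  by apply: eq_bigr => v _; field.
by rewrite -big_distrl -big_distrl /= -/MM; field.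
Qed.

Lemma L_abs f X : (forall u v, step_cfg X u v = X /\ stay X u v = X) -> Lop f X = f X.
Proof.
move=> H; rewrite -[RHS](L_const (f X) X); apply: eq_bigr => u _; apply: eq_bigr => v _.
by case: (H u v) => -> ->.
Qed.

Lemma absT u v : step_cfg [set: V] u v = [set: V] /\ stay [set: V] u v = [set: V].
Proof.
by rewrite /step_cfg /stay inE; split; apply/setP => z; rewrite !inE orbT.
Qed.

Lemma abs0 u v : step_cfg (finset.set0 : {set V}) u v = finset.set0 /\ stay (finset.set0 : {set V}) u v = finset.set0.
Proof.
by rewrite /step_cfg /stay inE; split => //; apply/setP => z; rewrite !inE andbF.
Qed.

Lemma L_sub f g X : Lop (fun Y => f Y - g Y) X = Lop f X - Lop g X.
Proof.
rewrite /Lop -sumrB; apply: eq_bigr => u _; rewrite -sumrB.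
by apply: eq_bigr => v _; ring.
Qed.

Lemma L_scale c f X : Lop (fun Y => c * f Y) X = c * Lop f X.
Proof.
rewrite /Lop big_distrr; apply: eq_bigr => u _; rewrite big_distrr.
by apply: eq_bigr => v _ /=; ring.
Qed.

Definition ms (f : {set V} -> R) := monof f /\ submf f.

Lemma ms_ext f g : f =1 g -> ms f -> ms g.
Proof.
move=> fg [h1 h2]; split; move=> X Y; rewrite -!fg; [exact: h1| exact: h2].
Qed.

Lemma L_ms f : ms f -> ms (Lop f).
Proof.
move=> [fm fs].
have M0 := MM_gt0.
apply: (sum_ms (F := fun u X => \sum_v (w u v / MM) * (r u * f (step_cfg X u v) + (m u - r u) * f (stay X u v)))) => u.
apply: (sum_ms (F := fun v X => (w u v / MM) * (r u * f (step_cfg X u v) + (m u - r u) * f (stay X u v)))) => v.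
apply: (ms_ext (f := fun X => (w u v / MM * r u) * f (step_cfg X u v) + (w u v / MM * (m u - r u)) * f (stay X u v))).
  by move=> X /=; ring.
have [h1 h2] := comp_ms (lmono_step u v) fm fs.
have [h3 h4] := comp_ms (lmono_stay u v) fm fs.
apply: lin_ms => //.
- by rewrite mulr_ge0 ?divr_ge0 // ltW.
- by rewrite mulr_ge0 ?divr_ge0 ?subr_ge0 // ltW.
Qed.

Lemma P_mono f g X : (forall Y, f Y <= g Y) -> Pop f X <= Pop g X.
Proof.
move=> fg; apply: ler_sum => u _; apply: ler_sum => v _.
apply: ler_wpM2l => //; rewrite mulr_ge0 ?divr_ge0 //; apply: ltW.
  exact: fit_gt0.
exact: FF_gt0.
Qed.

Lemma P_const c X : Pop (fun _ => c) X = c.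
Proof.
have F0 : FF X != 0 by rewrite gt_eqF // FF_gt0.
transitivity (\sum_u fit m r X u * c / FF X).
  apply: eq_bigr => u _; rewrite -[RHS]mul1r -(Hw1 u) big_distrl /=.
  by apply: eq_bigr => v _; rewrite -/(FF X); field.
by rewrite -big_distrl -big_distrl /= -/(FF X); field.
Qed.

Lemma term_eq f X u v :
  r u * f (step_cfg X u v) + (m u - r u) * f (stay X u v) =
  fit m r X u * f (step_cfg X u v) + (m u - fit m r X u) * f X.
Proof. by rewrite /fit /stay /step_cfg; case: ifP => _; ring. Qed.

Lemma LP f X : Lop f X = (FF X / MM) * Pop f X + (1 - FF X / MM) * f X.
Proof.
have F0 : FF X != 0 by rewrite gt_eqF // FF_gt0.
have M0 : MM != 0 by rewrite gt_eqF // MM_gt0.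
transitivity (\sum_u \sum_v ((FF X / MM) * ((fit m r X u / FF X) * w u v * f (step_cfg X u v)))
     + \sum_u \sum_v (f X / MM) * ((m u - fit m r X u) * w u v)).
  rewrite -big_split; apply: eq_bigr => u _; rewrite -big_split; apply: eq_bigr => v _ /=.
  by rewrite term_eq; field; rewrite M0 F0.
have E1 : \sum_u \sum_v ((FF X / MM) * ((fit m r X u / FF X) * w u v * f (step_cfg X u v)))
    = FF X / MM * Pop f X.
  by rewrite /Pop big_distrr; apply: eq_bigr => u _; rewrite big_distrr.
have E2 : \sum_u \sum_v (f X / MM) * ((m u - fit m r X u) * w u v) = f X / MM * (MM - FF X).
  rewrite /MM /FF -sumrB big_distrr; apply: eq_bigr => u _.
  by rewrite -big_distrr /= -big_distrr /= Hw1 mulr1.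
by rewrite E1 E2; field.
Qed.


Lemma L_ext f g X : f =1 g -> Lop f X = Lop g X.
Proof. by move=> fg; apply: eq_bigr => u _; apply: eq_bigr => v _; rewrite !fg. Qed.

Lemma setT_neq0 : [set: V] != finset.set0.
Proof. by apply/eqP => /setP /(_ z0); rewrite !inE. Qed.

Lemma reach_S t X : X != [set: V] ->
  reach_prob w m r t.+1 X = Pop (reach_prob w m r t) X.
Proof. by move=> H; rewrite /= (negbTE H). Qed.

Lemma reach_T t : reach_prob w m r t [set: V] = 1.
Proof. by case: t => [|t] /=; rewrite eqxx. Qed.

Lemma reach_b t X : 0 <= reach_prob w m r t X <= 1.
Proof.
elim: t X => [|t IH] X; first by rewrite /=; case: ifP => _; rewrite ?lexx ?ler01.
case XT: (X == [set: V]); first by rewrite (eqP XT) reach_T lexx ler01.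
rewrite reach_S ?XT //; apply/andP; split.
  by rewrite -{1}(P_const 0 X); apply: P_mono => Y; case/andP: (IH Y).
by rewrite -[X in _ <= X](P_const 1 X); apply: P_mono => Y; case/andP: (IH Y).
Qed.

Lemma reach_mono t X : reach_prob w m r t X <= reach_prob w m r t.+1 X.
Proof.
elim: t X => [|t IH] X.
  case XT: (X == [set: V]); first by rewrite (eqP XT) !reach_T.
  by move: (reach_b 1 X) => /andP[h _]; rewrite /= XT in h *.
case XT: (X == [set: V]); first by rewrite (eqP XT) !reach_T.
by rewrite !reach_S ?XT //; apply: P_mono.
Qed.

Lemma it_mono t f g : (forall Y, f Y <= g Y) -> forall Y, iter t Lop f Y <= iter t Lop g Y.
Proof. by move=> fg; elim: t => [|t IH] Y //=; apply: L_mono. Qed.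

Lemma absorbing X u v : (X = [set: V] \/ X = finset.set0) ->
  step_cfg X u v = X /\ stay X u v = X.
Proof. by case=> ->; [apply: absT | apply: abs0]. Qed.

Lemma it_abs t f X : (X = [set: V] \/ X = finset.set0) -> iter t Lop f X = f X.
Proof.
move=> HX; elim: t => [|t IH] //=; rewrite L_abs //; by move=> u v; apply: absorbing.
Qed.

Lemma it_b t f a b : (forall Y, a <= f Y <= b) -> forall Y, a <= iter t Lop f Y <= b.
Proof.
move=> H; elim: t => [|t IH] Y //=; apply/andP; split.
  by rewrite -{1}(L_const a Y); apply: L_mono => Z; case/andP: (IH Z).
by rewrite -[X in _ <= X](L_const b Y); apply: L_mono => Z; case/andP: (IH Z).
Qed.

Lemma it_sub t f g X : iter t Lop (fun Y => f Y - g Y) X = iter t Lop f X - iter t Lop g X.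
Proof.
elim: t X => [|t IH] X //=; rewrite -L_sub; apply: L_ext => Y; exact: IH.
Qed.

Lemma it_scale t c f X : iter t Lop (fun Y => c * f Y) X = c * iter t Lop f X.
Proof.
elim: t X => [|t IH] X //=; rewrite -L_scale; apply: L_ext => Y; exact: IH.
Qed.

Definition g0 (X : {set V}) : R := if X == finset.set0 then 0 else 1.
Definition ee (X : {set V}) : R := g0 X - reach_prob w m r 0 X.
Definition Gs t := iter t Lop g0.
Definition Hs t := iter t Lop (reach_prob w m r 0).
Definition Ds t := iter t Lop ee.

Lemma H_le_f t X : Hs t X <= reach_prob w m r t X.
Proof.
elim: t X => [|t IH] X; first by [].
rewrite /Hs iterS -/(Hs t).
case XT: (X == [set: V]).
  rewrite (eqP XT) L_abs; last by move=> u v; apply: absorbing; left.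
  by rewrite reach_T; apply: le_trans (IH _) _; rewrite reach_T.
apply: le_trans (L_mono _ IH) _.
rewrite LP reach_S ?XT //.
have a0 : 0 <= FF X / MM by rewrite divr_ge0 // ltW ?FF_gt0 ?MM_gt0.
have a1 : FF X / MM <= 1 by rewrite ler_pdivrMr ?MM_gt0 // mul1r FF_le.
have := reach_mono t X; rewrite reach_S ?XT // => h.
set a := FF X / MM in a0 a1 *.
have : (1 - a) * reach_prob w m r t X <= (1 - a) * Pop (reach_prob w m r t) X.
  by apply: ler_wpM2l => //; rewrite subr_ge0.
move=> h2; lra.
Qed.

Lemma g0_b Y : 0 <= g0 Y <= 1.
Proof. by rewrite /g0; case: ifP; rewrite ?lexx ?ler01. Qed.

Lemma G_dec t X : Gs t.+1 X <= Gs t X.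
Proof.
elim: t X => [|t IH] X.
  rewrite /Gs /=.
  case X0: (X == finset.set0).
    by rewrite (eqP X0) L_abs //; move=> u v; apply: absorbing; right.
  rewrite {2}/g0 X0 -[X in _ <= X](L_const 1 X); apply: L_mono => Y.
  by case/andP: (g0_b Y).
by rewrite /Gs iterS; apply: L_mono.
Qed.

Lemma PG t X : X != [set: V] -> Pop (Gs t) X <= Gs t X.
Proof.
move=> XT; have := G_dec t X; rewrite /Gs iterS -/(Gs t) LP => h.
have a0 : 0 < FF X / MM by rewrite divr_gt0 ?FF_gt0 ?MM_gt0.
set a := FF X / MM in a0 h.
rewrite -subr_ge0; have : 0 <= a * (Gs t X - Pop (Gs t) X) by lra.
by rewrite pmulr_rge0.
Qed.

Lemma f_le_G s t X : reach_prob w m r s X <= Gs t X.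
Proof.
have GT : Gs t [set: V] = 1.
  by rewrite /Gs it_abs; [rewrite /g0 (negbTE setT_neq0) | left].
elim: s X => [|s IH] X.
  case XT: (X == [set: V]); first by rewrite (eqP XT) reach_T GT.
  rewrite /= XT; case/andP: (it_b t g0_b X) => //.
case XT: (X == [set: V]); first by rewrite (eqP XT) reach_T GT.
rewrite reach_S ?XT //; apply: le_trans (PG t _) => //; last by rewrite XT.
exact: P_mono.
Qed.

Lemma g0_ms : ms g0.
Proof.
split.
  move=> X Y sXY; rewrite /g0; case: ifP => X0; first by case: ifP.
  case: ifP => // /eqP Y0; move: X0; rewrite Y0 in sXY.
  by rewrite finset.subset0 in sXY; rewrite sXY.
move=> X Y; rewrite /g0.
case: (X :&: Y =P finset.set0) => [I0|/eqP I0].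
  case X0: (X == finset.set0); case Y0: (Y == finset.set0);
    rewrite ?(eqP X0) ?(eqP Y0) ?finset.set0U ?eqxx; try case: ifP => _; lra.
have X0 : (X == finset.set0) = false.
  by apply: contraNF I0 => /eqP ->; rewrite finset.set0I.
have Y0 : (Y == finset.set0) = false.
  by apply: contraNF I0 => /eqP ->; rewrite finset.setI0.
rewrite X0 Y0; case: ifP => _; lra.
Qed.

Lemma G_ms t : ms (Gs t).
Proof. elim: t => [|t IH]; [exact: g0_ms | exact: L_ms]. Qed.

Lemma GHD t X : Gs t X = Hs t X + Ds t X.
Proof. by rewrite /Ds /ee it_sub -/(Gs t) -/(Hs t); ring. Qed.

Lemma ee_b Y : 0 <= ee Y <= 1.
Proof.
rewrite /ee /g0 /=; case: ifP => /eqP Y0; case: ifP => /eqP YT.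
- by move: setT_neq0; rewrite -YT Y0 eqxx.
- by rewrite subrr lexx ler01.
- by rewrite subrr lexx ler01.
- by rewrite subr0 ler01 lexx.
Qed.

Lemma ee_abs X : (X = [set: V] \/ X = finset.set0) -> ee X = 0.
Proof.
rewrite /ee /g0 /=; case=> ->; rewrite ?eqxx ?(negbTE setT_neq0) ?subrr //.
by rewrite ifF ?subrr //; apply/negbTE; rewrite eq_sym setT_neq0.
Qed.

Lemma sum_ge_term (I : finType) (F : I -> R) i : (forall j, 0 <= F j) -> F i <= \sum_j F j.
Proof. by move=> H; rewrite (bigD1 i) //= lerDl sumr_ge0. Qed.

Lemma L_lt1 (f : {set V} -> R) (X : {set V}) u v : (forall Y, f Y <= 1) -> u \in X -> 0 < w u v -> f (v |: X) < 1 ->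
  Lop f X < 1.
Proof.
move=> f1 uX wp fv.
have M0 := MM_gt0.
suff : 0 < Lop (fun Y => 1 - f Y) X by rewrite L_sub L_const subr_gt0.
have T0 : forall u' v', 0 <= (w u' v' / MM) * (r u' * (1 - f (step_cfg X u' v')) + (m u' - r u') * (1 - f (stay X u' v'))).
  move=> u' v'; apply: mulr_ge0; first by apply: divr_ge0; [exact: Hw0 | exact: ltW].
  apply: addr_ge0; apply: mulr_ge0.
  - exact: ltW (Hr u').
  - by rewrite subr_ge0 f1.
  - by rewrite subr_ge0 Hmr.
  - by rewrite subr_ge0 f1.
apply: lt_le_trans (sum_ge_term u _); last first.
  by move=> j; apply: sumr_ge0 => i _; apply: T0.
apply: lt_le_trans (sum_ge_term v _); last by move=> j; apply: T0.
rewrite /step_cfg /stay uX mulr_gt0 ?divr_gt0 //.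
have h1 : 0 < r u * (1 - f (v |: X)) by rewrite mulr_gt0 // subr_gt0.
have h2 : 0 <= (m u - r u) * (1 - f (v |: X)) by apply: mulr_ge0; rewrite subr_ge0 ?Hmr // ltW.
lra.
Qed.

Lemma path_edge (X : {set V}) p x : x \in X -> path E x p -> last x p \notin X ->
  exists u v, [/\ u \in X, v \notin X & E u v].
Proof.
elim: p x => [|y p IH] x xX /=; first by rewrite xX.
case/andP => exy pp ly.
case yX: (y \in X); first exact: (IH y yX pp ly).
by exists x, y; rewrite yX.
Qed.

Lemma exists_edge (X : {set V}) : X != finset.set0 -> X != [set: V] ->
  exists u v, [/\ u \in X, v \notin X & E u v].
Proof.
case/finset.set0Pn => x xX XT.
case: (pickP (fun y => y \notin X)) => [y yX|H].
  have /connectP [p pp ly] := Hc x y.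
  by apply: (path_edge xX pp); rewrite -ly.
case/eqP: XT; apply/setP => z; rewrite inE; have := H z; by move/negbFE.
Qed.

Lemma D_lt1 k X : X != finset.set0 -> (#|~: X| <= k)%N -> Ds k X < 1.
Proof.
elim: k X => [|k IH] X X0 Hk.
  have XT : X = [set: V].
    apply/setP => z; rewrite inE; apply/negPn/negP => zX.
    have : (0 < #|~: X|)%N by apply/card_gt0P; exists z; rewrite inE.
    by rewrite leqn0 in Hk; rewrite (eqP Hk).
  by rewrite /Ds /= ee_abs ?ltr01 //; left.
case XT: (X == [set: V]).
  by rewrite /Ds it_abs ?ee_abs ?ltr01 //; left; apply/eqP.
have [u [v [uX vX Euv]]] := exists_edge X0 (negbT XT).
rewrite /Ds iterS -/(Ds k); apply: (L_lt1 (u := u) (v := v)) => //.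
- by move=> Y; case/andP: (it_b k ee_b Y).
- exact: HE.
apply: IH.
  by apply/finset.set0Pn; exists v; rewrite !inE eqxx.
have -> : ~: (v |: X) = (~: X) :\ v by apply/setP => z; rewrite !inE negb_or.
move: Hk; rewrite (finset.cardsD1 v (~: X)) inE vX /=. by [].
Qed.

Lemma fin_max (T : finType) (g : T -> R) : (forall x, g x < 1) ->
  exists b, [/\ 0 <= b, b < 1 & forall x, g x <= b].
Proof.
move=> H.
suff [b [b0 b1 hb]] : exists b, [/\ 0 <= b, b < 1 & forall x, x \in enum T -> g x <= b].
  by exists b; split => // x; apply: hb; rewrite mem_enum.
elim: (enum T) => [|x s [b [b0 b1 hb]]].
  by exists 0; split => //; rewrite ltr01.
case: (lerP (g x) b) => gx.
  by exists b; split => // y; rewrite inE => /orP [/eqP ->|/hb].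
exists (g x); split => //; first by apply: le_trans (ltW gx).
move=> y; rewrite inE => /orP [/eqP ->|/hb h] //; exact: le_trans (ltW gx).
Qed.

Lemma fp_bounds t X : Hs t X <= fp w m r X <= Gs t X.
Proof.
rewrite /fp; case: ifP => [/eqP ->|X0].
  rewrite /Hs /Gs !it_abs; try by right.
  by rewrite /g0 /= eqxx ifF ?lexx //; apply/negbTE; rewrite eq_sym setT_neq0.
have nd : nondecreasing_seq (fun t => reach_prob w m r t X).
  by apply/nondecreasing_seqP => n; apply: reach_mono.
have cv : cvgn (fun t => reach_prob w m r t X).
  apply: nondecreasing_is_cvgn => //; exists 1 => _ [n _ <-].
  by case/andP: (reach_b n X).
apply/andP; split.
  apply: le_trans (H_le_f t X) _.
  exact: (nondecreasing_cvgn_le nd cv).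
apply: limr_le => //; apply: nearW => n; exact: f_le_G.
Qed.

Lemma main_sub S T :
  fp w m r (S :|: T) + fp w m r (S :&: T) <= fp w m r S + fp w m r T.
Proof.
set N := #|V|.
have DN : forall X, Ds N X < 1.
  move=> X; case X0: (X == finset.set0).
    by rewrite /Ds it_abs ?ee_abs ?ltr01 //; right; apply/eqP.
  by apply: D_lt1; rewrite ?X0 // max_card.
have [b [b0 b1 hb]] := fin_max DN.
have Hb : forall X, Ds N X <= b * ee X.
  move=> X; case XT: (X == [set: V]).
    by rewrite /Ds it_abs ?ee_abs ?mulr0 ?lexx //; left; apply/eqP.
  case X0: (X == finset.set0).
    by rewrite /Ds it_abs ?ee_abs ?mulr0 ?lexx //; right; apply/eqP.
  by rewrite /ee /g0 X0 /= XT subr0 mulr1.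
have Dgeo : forall k X, Ds (k * N) X <= b ^+ k * ee X.
  elim=> [|k IH] X; first by rewrite mul0n expr0 mul1r.
  rewrite mulSn /Ds iterD -/(Ds (k * N)).
  apply: le_trans (@it_mono N _ (fun Y => b ^+ k * ee Y) IH X) _.
  rewrite it_scale -/(Ds N) exprS (mulrC b) -mulrA; apply: ler_wpM2l; first exact: exprn_ge0.
  exact: Hb.
have Dk : forall k X, Ds (k * N) X <= b ^+ k.
  move=> k X; apply: le_trans (Dgeo k X) _.
  rewrite -[X in _ <= X]mulr1; apply: ler_wpM2l; first exact: exprn_ge0.
  by case/andP: (ee_b X).
set a := fp w m r (S :|: T) + fp w m r (S :&: T) - (fp w m r S + fp w m r T).
suff : a / 2 <= 0 by rewrite /a; lra.
have key : forall k, a / 2 <= b ^+ k.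
  move=> k; set t := (k * N)%N.
  have [_ G1] := G_ms t.
  have := G1 S T.
  case/andP: (fp_bounds t (S :|: T)) => _ h1.
  case/andP: (fp_bounds t (S :&: T)) => _ h2.
  case/andP: (fp_bounds t S) => h3 _.
  case/andP: (fp_bounds t T) => h4 _.
  rewrite !GHD.
  have := Dk k S; have := Dk k T; rewrite -/t.
  rewrite !GHD in h1 h2.
  rewrite /a => d1 d2 d3.
  move: (fp w m r (S :|: T)) (fp w m r (S :&: T)) (fp w m r S) (fp w m r T) h1 h2 h3 h4 d1 d2 d3.
  move: (Hs t (S :|: T)) (Ds t (S :|: T)) (Hs t (S :&: T)) (Ds t (S :&: T)) (Hs t S) (Ds t S) (Hs t T) (Ds t T) (b ^+ k).
  move=> *; lra.
have bn : `|b| < 1 by rewrite ger0_norm.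
apply: (cvgr_to_ge (cvg_expr bn)).
by apply: nearW => k; apply: key.
Qed.

End Main.

Theorem lemma6 (R : realType) (V : finType) (E : rel V) (w : V -> V -> R)
  (m r : V -> R) :
  fitness_graph E w m r -> mutant_biased m r ->
  forall S T : {set V},
    fp w m r (S :|: T) + fp w m r (S :&: T) <= fp w m r S + fp w m r T.
Proof.
move=> [Hc [HE [HnE [Hw1 [Hr Hm]]]]] Hmr S T.
case: (pickP V) => [z0 _ | Hnone].
  apply: (main_sub (E := E)) => //.
  move=> u v; case Euv: (E u v); first by apply: ltW; apply: HE.
  by rewrite HnE ?Euv.
have H0 : forall X : {set V}, X = finset.set0.
  by move=> X; apply/setP => x; have := Hnone x.
by rewrite !(H0 (S :|: T)) !(H0 (S :&: T)) !(H0 S) !(H0 T) lexx.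
Qed.
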